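(* Let $l$ and $m$ be positive integers, let $n=2^m-1$, let $\pi : (\mathbb Z_2^m)^* \to \mathbb Z_{n}$ be a bijection, let $q\equiv 1\pmod{2n}$ be a prime power, let $\rho$ be a primitive element of $\mathbb F_q$, and let $\Gamma = \operatorname{Cay}(G_{l,m,q},S(\pi))$. Let $g\in(\mathbb Z_2^m)^*$ with $\pi(g)\neq 1$, and let $v=(0,0,0)$ and $w=(0,g,\rho)$ be vertices of $\Gamma$. Then the number of common neighbours of $v$ and $w$ is $$2 + \sum_{\substack{h \in (\mathbb Z_2^m)^* \\ h \ne g}} c^{n}_q\big(\pi(h)-1,\ \pi(h+g)-1\big).$$
   Context: For an additive group $A$, $A^*=A\setminus\{0\}$. $G_{l,m,q} = \mathbb Z_l \oplus \mathbb Z_2^m \oplus \mathbb F_q$. $S_0 = \{(g,0) : g \in (\mathbb Z_l \oplus \mathbb Z_2^m)^*\}$; $S_{z,\pi} = \{(0,z,\rho^j) : j\in\mathbb Z,\ j \equiv \pi(z) \pmod{n}\}$ for $z\in(\mathbb Z_2^m)^*$; $S(\pi) = S_0 \cup \bigcup_z S_{z,\pi}$. $\operatorname{Cay}(G_{l,m,q},S(\pi))$ has vertex set $G_{l,m,q}$, $x\sim y$ iff $y-x\in S(\pi)$. Write $q=2nr+1$; for $i\in\mathbb Z_n$, $C^n_q(i) = \{\rho^{nj+i} : 0\le j\le 2r-1\}$; for $a,b\in\mathbb Z_n$, $c^n_q(a,b) = |(C^n_q(a)+1)\cap C^n_q(b)|$ (indices in $\mathbb Z_n$). *)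

(* Defs.v *)
From HB Require Import structures.
From mathcomp Require Import all_boot all_order all_algebra.
Set Implicit Arguments. Unset Strict Implicit. Unset Printing Implicit Defensive.
Import Order.TTheory GRing.Theory Num.Theory.
Local Open Scope ring_scope.

(* Z_l for l >= 1 is represented by 'I_(l.-1).+1 (convertible to 'I_l when l > 0),
   which carries the canonical additive group structure of Z/lZ. *)
Definition Zl (l : nat) := 'I_(l.-1).+1.

Definition Z2m (m : nat) := 'rV['Z_2]_m.

Definition Gq (l m : nat) (F : finFieldType) := (Zl l * Z2m m * F)%type.

Section Cayley.
Variables (l m : nat) (F : finFieldType).
Variables (pi : Z2m m -> nat) (n : nat) (rho : F).

Definition S0 (x : Gq l m F) : Prop := x.1 != 0 /\ x.2 = 0.

Definition Szpi (z : Z2m m) (x : Gq l m F) : Prop :=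
  exists j : int, (j %% (n : int))%Z = (pi z)%:Z /\ x = ((0, z), rho ^ j).

Definition Spi (x : Gq l m F) : Prop := S0 x \/ exists z : Z2m m, z != 0 /\ Szpi z x.

Definition cay_adj (x y : Gq l m F) : Prop := Spi (y - x).

Definition common_nbr (v w x : Gq l m F) : Prop := cay_adj v x /\ cay_adj w x.
End Cayley.

(* cyclotomic classes: q = 2nr+1, C^n_q(i) = {rho^(nj+i) : 0 <= j <= 2r-1} *)
Definition cyc_class (F : finFieldType) (rho : F) (n i : nat) : {set F} :=
  [set rho ^+ (n * j + i) | j : 'I_(2 * ((#|F|.-1) %/ (2 * n)))].

Definition cyc_num (F : finFieldType) (rho : F) (n a b : nat) : nat :=
  #|[set y + 1 | y in cyc_class rho n a] :&: cyc_class rho n b|.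

(* Main.v *)
Require Import Defs.
From HB Require Import structures.
From mathcomp Require Import all_boot all_order all_algebra.
From mathcomp Require Import zify finalg finfield.
Import Order.TTheory GRing.Theory Num.Theory.
Set Implicit Arguments. Unset Strict Implicit.
Local Open Scope ring_scope.

Lemma Npos (F : finFieldType) : (0 < #|F|.-1)%N.
Proof. by have := card_finNzRing_gt1 F; case: #|F| => [|[|]]. Qed.

Lemma rho_neq0 (F : finFieldType) (rho : F) :
  (#|F|.-1).-primitive_root rho -> rho != 0.
Proof.
move=> hp; apply/eqP => r0; have := prim_expr_order hp.
rewrite r0 expr0n eqn0Ngt Npos /= => /eqP; by rewrite eq_sym oner_eq0.
Qed.

Lemma cardN (F : finFieldType) (n : nat) : (0 < n)%N -> (#|F| %% (2 * n) = 1)%N ->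
  #|F|.-1 = (n * (2 * ((#|F|.-1) %/ (2 * n))))%N.
Proof.
move=> n0 hq.
have e : #|F|.-1 = (#|F| %/ (2 * n) * (2 * n))%N.
  by rewrite {1}(divn_eq #|F| (2 * n)) hq addn1.
rewrite e mulnK ?muln_gt0 //; lia.
Qed.

Lemma memC (F : finFieldType) (rho : F) (n i : nat) (f : F) :
  (0 < n)%N -> (#|F| %% (2 * n) = 1)%N -> (#|F|.-1).-primitive_root rho -> (i < n)%N ->
  f \in cyc_class rho n i <-> exists k, f = rho ^+ k /\ (k %% n = i)%N.
Proof.
move=> n0 hq hp hi; rewrite /cyc_class; split.
  case/imsetP => j _ ->; exists (n * j + i)%N; split => //.
  by rewrite mulnC modnMDl modn_small.
case=> k [-> hk]; apply/imsetP.
have hN := cardN n0 hq.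
set N := #|F|.-1 in hN *; set r := (N %/ (2 * n))%N in hN *.
have N0 : (0 < N)%N by exact: Npos.
have hkN : (k %% N < N)%N by rewrite ltn_pmod.
have hj : ((k %% N) %/ n < 2 * r)%N by rewrite ltn_divLR // mulnC -hN.
exists (Ordinal hj) => //=.
rewrite -(prim_expr_mod hp k); congr (_ ^+ _).
have dv : (n %| N)%N by rewrite hN dvdn_mulr.
by rewrite {1}(divn_eq (k %% N) n) (modn_dvdm _ dv) hk mulnC.
Qed.

Lemma memCpow (F : finFieldType) (rho : F) (n i k : nat) :
  (0 < n)%N -> (#|F| %% (2 * n) = 1)%N -> (#|F|.-1).-primitive_root rho -> (i < n)%N ->
  rho ^+ k \in cyc_class rho n i <-> (k %% n = i)%N.
Proof.
move=> n0 hq hp hi; rewrite memC //; split; last by move=> h; exists k.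
case=> k' [/eqP e hk]; move: e; rewrite (eq_prim_root_expr hp) => /eqP e.
have dv : (n %| #|F|.-1)%N by rewrite (cardN n0 hq) dvdn_mulr.
by rewrite -(modn_dvdm k dv) e modn_dvdm.
Qed.

Lemma nz_pow (F : finFieldType) (rho : F) (f : F) :
  (#|F|.-1).-primitive_root rho -> f != 0 -> exists k, f = rho ^+ k.
Proof.
move=> hp f0.
have e : f ^+ #|F|.-1 = 1.
  apply: (mulIf f0); rewrite mul1r -exprSr prednK; first exact: expf_card.
  exact: ltnW (card_finNzRing_gt1 F).
by case: (prim_rootP hp e) => k ->; exists k.
Qed.

Lemma C0 (F : finFieldType) (rho : F) (n i : nat) :
  (#|F|.-1).-primitive_root rho -> 0 \notin cyc_class rho n i.
Proof.
move=> hp; apply/negP => /imsetP [j _] /esym/eqP.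
by rewrite expf_eq0 (negPf (rho_neq0 hp)) andbF.
Qed.

Lemma arith0 (n i a : nat) : (0 < n)%N -> (i < n)%N -> (a < n)%N ->
  ((a + 1) %% n = i)%N <-> (a = (i + n - 1) %% n)%N.
Proof.
move=> n0 hi ha.
have -> : ((i + n - 1) %% n = if i == 0%N then n - 1 else i - 1)%N.
  case: eqP => [->|i0]; first by rewrite add0n modn_small //; lia.
  by rewrite (_ : (i + n - 1 = (i - 1) + n)%N); [rewrite modnDr modn_small //; lia | lia].
have -> : ((a + 1) %% n = if (a + 1 == n)%N then 0 else a + 1)%N.
  case: eqP => [->|a0]; first by rewrite modnn.
  by rewrite modn_small //; lia.
case: eqP; case: eqP; lia.
Qed.

Lemma arith1 (n i k : nat) : (0 < n)%N -> (i < n)%N ->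
  (k.+1 %% n = i)%N <-> (k %% n = (i + n - 1) %% n)%N.
Proof.
move=> n0 hi; rewrite -addn1 -modnDml; apply: arith0 => //.
by rewrite ltn_pmod.
Qed.

Lemma shiftC (F : finFieldType) (rho : F) (n i : nat) (t : F) :
  (0 < n)%N -> (#|F| %% (2 * n) = 1)%N -> (#|F|.-1).-primitive_root rho -> (i < n)%N ->
  rho * t \in cyc_class rho n i <-> t \in cyc_class rho n ((i + n - 1) %% n).
Proof.
move=> n0 hq hp hi.
have [->|t0] := eqVneq t 0.
  by rewrite mulr0 !(negPf (C0 _ _ hp)).
case: (nz_pow hp t0) => k ->.
rewrite -exprS !memCpow // ?ltn_pmod //.
exact: arith1.
Qed.

Lemma intC (F : finFieldType) (rho : F) (n i : nat) (f : F) :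
  (0 < n)%N -> (#|F| %% (2 * n) = 1)%N -> (#|F|.-1).-primitive_root rho -> (i < n)%N ->
  (exists j : int, (j %% (n : int))%Z = i%:Z /\ f = rho ^ j) <-> f \in cyc_class rho n i.
Proof.
move=> n0 hq hp hi; split; last first.
  rewrite memC //; case=> k [-> hk]; exists k%:Z; split; first by rewrite modz_nat hk.
  by rewrite exprnP.
case=> [[k|b]] [hj ->].
  by rewrite -exprnP memCpow //; move: hj; rewrite modz_nat => -[].
have hN := cardN n0 hq.
set N := #|F|.-1 in hN hp *; set r := (N %/ (2 * n))%N in hN *.
have N0 : (0 < N)%N by exact: Npos.
set K := (b.+1 * (N - 1))%N.
have eK : (K + b.+1 = b.+1 * (2 * r) * n)%N.
  rewrite /K; have : (0 < N)%N by []; rewrite hN; nia.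
have -> : rho ^ Negz b = rho ^+ K.
  have a0 : rho ^+ b.+1 != 0 by rewrite expf_neq0 // rho_neq0.
  have hm : rho ^+ b.+1 * rho ^+ K = 1.
    have eN : (b.+1 * (2 * r) * n = N * b.+1)%N by rewrite hN; nia.
    by rewrite -exprD addnC eK eN exprM (prim_expr_order hp) expr1n.
  transitivity ((rho ^+ b.+1)^-1); first by []. by rewrite -[RHS](mulKf a0) hm mulr1.
rewrite memCpow //.
have eZ : (K%:Z = (b.+1 * (2 * r))%N%:Z * n%:Z + Negz b)%R.
  by rewrite NegzE -PoszM -eK PoszD addrK.
move: hj; rewrite -(modzMDl (b.+1 * (2 * r))%N%:Z) -eZ modz_nat => -[].
by [].
Qed.

Lemma Spi_char l m (F : finFieldType) (pi : Z2m m -> nat) (n : nat) (rho : F) (x : Gq l m F) :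
  (0 < n)%N -> (#|F| %% (2 * n) = 1)%N -> (#|F|.-1).-primitive_root rho ->
  (forall z : Z2m m, z != 0 -> (pi z < n)%N) ->
  Spi pi n rho x <-> (x.1 != 0 /\ x.2 = 0) \/
     (x.1.1 = 0 /\ x.1.2 != 0 /\ x.2 \in cyc_class rho n (pi x.1.2)).
Proof.
move=> n0 hq hp hlt; case: x => [[a z] f]; rewrite /Spi /S0 /Szpi /=; split.
- case=> [h|[z' [z0 [j [hj [-> -> ->]]]]]]; [by left | right]; split => //; split => //.
  apply: (proj1 (@intC F rho n (pi z') (rho ^ j) n0 hq hp (hlt _ z0))); by exists j.
- case=> [h|[-> [z0 /(intC f n0 hq hp (hlt _ z0)) [j [hj ->]]]]]; [by left | right].
  by exists z; split => //; exists j.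
Qed.

Lemma char2 m (v : Z2m m) : - v = v.
Proof.
apply/rowP => i; rewrite mxE.
case: (v 0 i) => [[|[|k]] ?] //; apply/val_inj => //=.
Qed.

Lemma char2' m (v : Z2m m) : v + v = 0.
Proof. by rewrite -{1}(char2 v) addNr. Qed.

Theorem proposition2p4 (l m : nat) (F : finFieldType) (pi : Z2m m -> nat)
  (rho : F) (g : Z2m m) :
  (0 < l)%N -> (0 < m)%N ->
  let n := (2 ^ m - 1)%N in
  (* pi restricted to (Z_2^m)^* is a bijection onto Z_n = {0,...,n-1} *)
  (forall z : Z2m m, z != 0 -> (pi z < n)%N) ->
  {in [pred z : Z2m m | z != 0] &, injective pi} ->
  (forall i : nat, (i < n)%N -> exists2 z : Z2m m, z != 0 & pi z = i) ->
  (* q = #|F| = 1 mod 2n; F is the finite field F_q *)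
  (#|F| %% (2 * n) = 1)%N ->
  (* rho is a primitive element of F_q *)
  (#|F|.-1).-primitive_root rho ->
  g != 0 -> pi g != (1 %% n)%N ->
  exists2 A : {set Gq l m F},
    (forall x, x \in A <-> common_nbr pi n rho (0, 0, 0) ((0, g), rho) x) &
    #|A| = (2 + \sum_(h : Z2m m | (h != 0%R) && (h != g))
              cyc_num rho n ((pi h + n - 1) %% n) ((pi (h + g)%R + n - 1) %% n))%N.
Proof.
move=> hl hm n hlt hinj hsurj hq hp hg hpg.
have n0 : (0 < n)%N.
  have h2 : (1 < 2 ^ m)%N by rewrite -{1}(expn0 2) ltn_exp2l.
  rewrite /n; lia.
have hN := cardN n0 hq.
set N := #|F|.-1 in hN hp *; set r := (N %/ (2 * n))%N in hN *.
have N0 : (0 < N)%N by exact: Npos.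
have rho0 : rho != 0 := rho_neq0 hp.
have [z1 z10 pz1] := hsurj (1 %% n)%N (ltn_pmod 1 n0).
have z1g : z1 != g by apply/eqP => e; move/eqP: hpg; rewrite -e pz1.
set C := cyc_class rho n.
have Crho : forall i, (i < n)%N -> rho \in C i <-> i = (1 %% n)%N.
  move=> i hi; rewrite -{1}(expr1 rho) /C memCpow //; split => ->.
  - by [].
  - by [].
have Cmrho : forall i, (i < n)%N -> - rho \in C i <-> i = (1 %% n)%N.
  move=> i hi.
  have u : rho ^+ (n * r) = -1.
    have : (rho ^+ (n * r)) ^+ 2 == 1.
      by rewrite -exprM (_ : (n * r * 2 = N)%N) ?(prim_expr_order hp) // hN; lia.
    rewrite sqrf_eq1 => /orP [|/eqP //].
    move/eqP => e; have := eq_prim_root_expr hp (n * r) 0.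
    rewrite e expr0 eqxx mod0n => /esym/eqP.
    have r0 : (0 < r)%N by move: N0; rewrite hN; nia.
    rewrite modn_small; [nia | rewrite hN; nia].
  rewrite -mulrN1 -u -exprS /C memCpow // -addn1 mulnC modnMDl.
  by split => ->.
pose E := fun h : Z2m m => [set y + 1 | y in C ((pi h + n - 1) %% n)%N] :&:
    C ((pi (h + g)%R + n - 1) %% n)%N.
pose PS := [set p : Z2m m * F | (p.1 != 0) && (p.1 != g) && (p.2 \in E p.1)].
pose A3 := [set (((0 : Zl l), p.1 + g), rho * p.2) | p in PS].
have sh := fun i t (hi : (i < n)%N) => @shiftC F rho n i t n0 hq hp hi.
have hgg : forall h, h != g -> h + g != 0 by move=> h; rewrite addr_eq0 char2.
have memE : forall h t, h != 0 -> h != g -> t \in E h <->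
    (rho * t - rho \in C (pi h)) /\ (rho * t \in C (pi (h + g))).
  move=> h t h0 hg'.
  have ha := hlt _ h0; have hb := hlt _ (hgg _ hg').
  rewrite /E inE; split.
  - case/andP => /imsetP [y hy ->] hb'; split.
    + by rewrite mulrDr mulr1 addrK; apply/(proj2 (sh _ _ ha)).
    + by apply/(proj2 (sh _ _ hb)).
  - case=> h1 h2; apply/andP; split.
    + apply/imsetP; exists (t - 1); last by rewrite subrK.
      by apply/(proj1 (sh _ _ ha)); rewrite mulrBr mulr1.
    + exact: (proj1 (sh _ _ hb)).
exists (((0 : Zl l), z1 + g, 0) |: ((((0 : Zl l), z1), rho) |: A3)).
  move=> [[a z] f].
  have S1 := @Spi_char l m F pi n rho (((a,z),f) - (0,0,0)) n0 hq hp hlt.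
  have S2 := @Spi_char l m F pi n rho (((a,z),f) - ((0,g),rho)) n0 hq hp hlt.
  simpl in S1, S2; rewrite !subr0 in S1 S2.
  rewrite /common_nbr /cay_adj.
  rewrite (_ : (a, z, f) - (0, 0, 0) = (a, z, f)); last by rewrite /= !subr0.
  have pne : forall (a' : Zl l) (z' : Z2m m), z' != 0 -> (a', z') != 0.
    by move=> a' z' hz; apply/eqP => /(congr1 snd) /= /eqP; apply/negP.
  split.
  - rewrite !inE => /orP [/eqP [ea ez ef] | /orP [/eqP [ea ez ef] | /imsetP [[h t] hPS [ea ez ef]]]]; subst a z f.
    + split; [apply/S1; left | apply/S2; right].
      * by split => //; apply: pne; apply: hgg.
      * split => //; rewrite addrK sub0r; split => //.
        by apply/(proj2 (Cmrho _ (hlt _ z10))).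
    + split; [apply/S1; right | apply/S2; left].
      * by split => //; split => //; apply/(proj2 (Crho _ (hlt _ z10))).
      * split; last by rewrite subrr.
        by apply/eqP => /(congr1 snd) /= /eqP; rewrite subr_eq0; apply/negP.
    + rewrite inE /= in hPS; case/andP: hPS => /andP [h0 hg'] /(memE _ _ h0 hg') [m1 m2].
      split; [apply/S1; right | apply/S2; right].
      * by split => //; split => //; apply: hgg.
      * by split => //; rewrite addrK; split.
  - move=> [/S1 H1 /S2 H2].
    case: H1 => [[az0 f0] | [a0 [z0 fC]]]; case: H2 => [[azg0 fr] | [a0' [zg0 fC']]].
    + by move: fr; rewrite f0 sub0r => /eqP; rewrite oppr_eq0 (negPf rho0).
    + rewrite f0 sub0r in fC'.
      have := (proj1 (Cmrho _ (hlt _ zg0))) fC'; rewrite -pz1 => /(hinj _ _ zg0 z10) e.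
      rewrite !inE; apply/orP; left; apply/eqP.
      by rewrite a0' f0 -e subrK.
    + move/eqP: fr; rewrite subr_eq0 => /eqP fr.
      rewrite fr in fC.
      have := (proj1 (Crho _ (hlt _ z0))) fC; rewrite -pz1 => /(hinj _ _ z0 z10) e.
      rewrite !inE; apply/orP; right; apply/orP; left; apply/eqP.
      by rewrite a0 fr e.
    + rewrite !inE; apply/orP; right; apply/orP; right; apply/imsetP.
      have hg' : z - g != g.
        by apply: contra z0 => /eqP e; rewrite -(subrK g z) e char2'.
      exists (z - g, f / rho).
        rewrite inE /= zg0 hg' /=; apply/(proj2 (memE _ _ zg0 hg')).
        by rewrite mulrC divfK // subrK.
      by rewrite /= subrK mulrC divfK // a0.
have inj3 : injective (fun p : Z2m m * F => (((0 : Zl l), p.1 + g), rho * p.2)).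
  move=> [h t] [h' t'] /= [e1 e2].
  by rewrite (addIr g e1) (mulfI rho0 e2).
have n3 : ((0 : Zl l), z1, rho) \notin A3.
  apply/imsetP => -[[h t] hPS [e1 e2]].
  rewrite inE /= in hPS; case/andP: hPS => /andP [h0 hg'] /(memE _ _ h0 hg') [m1 m2].
  by move: m1; rewrite -e2 subrr (negPf (C0 _ _ hp)).
have n1 : ((0 : Zl l), z1 + g, 0) \notin ((((0 : Zl l), z1), rho) |: A3).
  rewrite in_setU1 negb_or; apply/andP; split.
    by apply/eqP => -[_ e2]; move: rho0; rewrite -e2 eqxx.
  apply/imsetP => -[[h t] hPS [e1 e2]].
  rewrite inE /= in hPS; case/andP: hPS => /andP [h0 hg'] /(memE _ _ h0 hg') [m1 m2].
  by move: m2; rewrite -e2 (negPf (C0 _ _ hp)).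
rewrite cardsU1 n1 cardsU1 n3 (card_imset _ inj3) addnA -[(true + true)%N]/2%N; apply/eqP; rewrite eqn_add2l; apply/eqP.
rewrite (eq_bigr (fun h => \sum_(t | t \in E h) 1)%N); last first.
  by move=> h _; rewrite sum1_card.
rewrite pair_big_dep sum1dep_card.
by apply: eq_card => -[h t]; rewrite !inE.
Qed.
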